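(* Let $T>0$, $\sigma:(0,\infty)^d\to\mathbb R^{d\times d}$, $\mathcal L:=\tfrac12\mathrm{Tr}(\sigma\sigma'\nabla^2)$, $b:(0,\infty)^d\to\mathbb R_+$ bounded continuous and $\mu>0$. Let $\Psi:(0,\infty)^d\to(0,\infty)$ be a strictly positive $C^2$ function and $\lambda>0$, $c$ constants such that: $\mathcal L\Psi(x)\le\lambda(1+\Psi(x))$ for $x\in(0,\infty)^d$; $\Psi(x)\to\infty$ as $x\to\bar x$ for every $\bar x\in\mathcal O$; for every $M>0$ there is $R$ with $\Psi(x)/\underline x\ge M$ whenever $\underline x\ge R$; and $c\Psi(x)\ge b(x)|\nabla\Psi(x)\sigma(x)|$ for all $x\in(0,\infty)^d$. Then for sufficiently large $L$, the function $\Phi(t,x):=e^{L(T-t)}\Psi(x)$ satisfies $-\partial_t\Phi-\mathcal L\Phi-\mu\Phi-b|\nabla\Phi\,\sigma|>0$ in $[0,T]\times(0,\infty)^d$.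
   Context: $\underline x=\sum_ix^i$; $\mathcal O=\{x\in\mathbb R_+^d:x^i=0\text{ for some }i\}$; $\nabla\Phi$ is the spatial gradient (a row vector) so $\nabla\Phi\,\sigma\in\mathbb R^d$. *)

(* Defs.v *)
From HB Require Import structures.
From mathcomp Require Import all_boot all_order all_algebra.
From mathcomp Require Import all_classical all_reals all_analysis.
Set Implicit Arguments. Unset Strict Implicit. Unset Printing Implicit Defensive.
Import Order.TTheory GRing.Theory Num.Theory.
Import numFieldNormedType.Exports.
Local Open Scope ring_scope.
Local Open Scope classical_set_scope.

Section Defs.
Variables (R : realType) (d : nat).
Notation V := 'rV[R]_d.

Definition ebase (i : 'I_d) : V := delta_mx 0 i.

Definition orthant : set V := [set x | forall i, 0 < x 0 i].

Definition Obound : set V :=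
  [set x | (forall i, 0 <= x 0 i) /\ exists i, x 0 i = 0].

(* underline x = sum of coordinates *)
Definition usum (x : V) : R := \sum_i x 0 i.

Definition enorm (v : V) : R := Num.sqrt (\sum_i v 0 i ^+ 2).

Definition partial (f : V -> R) (i : 'I_d) (x : V) : R := 'D_(ebase i) f x.
Definition partial2 (f : V -> R) (i j : 'I_d) (x : V) : R :=
  'D_(ebase i) (partial f j) x.

Definition grad (f : V -> R) (x : V) : V := \row_i partial f i x.

Definition C2_on_orthant (f : V -> R) : Prop :=
  forall x, orthant x ->
    [/\ differentiable f x,
        (forall i, differentiable (partial f i) x) &
        (forall i j, {for x, continuous (partial2 f i j)})].

Definition gen (sigma : V -> 'M[R]_d) (f : V -> R) (x : V) : R :=
  2^-1 * \sum_i \sum_j (sigma x *m (sigma x)^T) i j * partial2 f i j x.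

End Defs.

(* Main.v *)
Set Warnings "-notation-overridden,-ambiguous-paths,-notation-incompatible-prefix".
Require Import Defs.
From HB Require Import structures.
From mathcomp Require Import all_boot all_order all_algebra.
From mathcomp Require Import all_classical all_reals all_analysis.
From mathcomp Require Import ring lra.
Import Order.TTheory GRing.Theory Num.Theory.
Import numFieldNormedType.Exports.
Local Open Scope ring_scope.
Local Open Scope classical_set_scope.
Lemma deriveMl_gen (R : realType) (V : normedModType R) (f : V -> R) (k : R) x v :
  'D_v (fun y => k * f y) x = k * 'D_v f x.
Proof.
have [->|k0] := eqVneq k 0.
  rewrite mul0r (_ : (fun y => 0 * f y) = cst 0); first exact: derive_cst.
  by apply/funext => y; rewrite mul0r.
have [df|ndf] := pselect (derivable f x v).
  exact: (@deriveZ R V R^o f k x v df).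
have ndf' : ~ derivable (fun y => k * f y) x v.
  move=> df; apply: ndf.
  have E : (k^-1 \*: (fun y => k * f y) : V -> R^o) = f.
    by apply/funext => y /=; change (k^-1 * (k * f y) = f y); rewrite mulrA mulVf // mul1r.
  have := @derivableZ R V R^o (fun y => k * f y) k^-1 x v df.
  by rewrite E.
rewrite /derive (dvgP ndf).
rewrite (dvgP ndf').
by rewrite mulr0.
Qed.
Lemma dexp (R : realType) (L T P t : R) :
  'D_1 (fun s => expR (L * (T - s)) * P) t = - L * expR (L * (T - t)) * P.
Proof.
rewrite (_ : (fun s => _) = (fun s => P * (expR \o (fun s => L * (T - s))) s)); last first.
  by apply/funext => s; rewrite mulrC.
rewrite deriveMl_gen.
have H : is_derive t (1:R) (fun s : R => L * (T - s)) (- L).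
  have H1 : is_derive t (1:R) (fun s : R => T - s) (0 - 1).
    apply: is_deriveB.
  have H3 := @is_deriveZ R R^o R^o (fun s : R => T - s) L t 1 (0 - 1) H1.
  have E : (L *: (0 - 1) : R^o) = - L by change (L * (0 - 1) = - L); lra.
  rewrite E in H3; exact: H3.
have H2 := @is_derive1_comp R expR (fun s => L * (T - s)) t (expR (L * (T - t))) (-L) (is_derive_expR _) H.
rewrite (@derive_val _ _ _ _ _ _ _ H2); lra.
Qed.
Section Scal.
Variables (R : realType) (d : nat).
Implicit Types (f : 'rV[R]_d -> R) (k : R).

Lemma partialZ f k i : partial (fun y => k * f y) i = fun y => k * partial f i y.
Proof. by apply/funext => y; rewrite /partial deriveMl_gen. Qed.

Lemma partial2Z f k i j x : partial2 (fun y => k * f y) i j x = k * partial2 f i j x.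
Proof. by rewrite /partial2 partialZ /partial deriveMl_gen. Qed.

Lemma genZ sigma f k x : gen sigma (fun y => k * f y) x = k * gen sigma f x.
Proof.
rewrite /gen mulrCA; congr (_ * _); rewrite big_distrr; apply: eq_bigr => i _.
rewrite big_distrr; apply: eq_bigr => j _.
by rewrite partial2Z mulrCA.
Qed.

Lemma gradZ f k x : grad (fun y => k * f y) x = k *: grad f x.
Proof.
by apply/rowP => i; rewrite !mxE /partial deriveMl_gen.
Qed.

Lemma enormZ k (v : 'rV[R]_d) : enorm (k *: v) = `|k| * enorm v.
Proof.
rewrite /enorm -sqrtr_sqr -sqrtrM ?sqr_ge0 //; congr Num.sqrt.
rewrite big_distrr; apply: eq_bigr => i _; rewrite mxE exprMn //.
Qed.
End Scal.
Lemma Psi_lb (R : realType) (d : nat) (Psi : 'rV[R]_d -> R) :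
  (forall x, orthant x -> 0 < Psi x) ->
  (forall x, orthant x -> {for x, continuous Psi}) ->
  (forall xbar, Obound xbar -> forall M : R, exists2 delta : R, 0 < delta &
     forall x, orthant x -> `|x - xbar| < delta -> M <= Psi x) ->
  (forall M : R, 0 < M -> exists Rr : R, forall x, orthant x ->
     Rr <= usum x -> M <= Psi x / usum x) ->
  exists2 m, 0 < m & forall x, orthant x -> m <= Psi x.
Proof.
move=> Ppos Pcont Pbd Pgr.
have [Rr HRr] := Pgr 1 ltr01.
pose B := Num.max Rr 1.
have cbox : compact [set v : 'rV[R]_d | forall i, `[0, B]%classic (v ord0 i)].
  exact: (@rV_compact R d (fun _ => `[0, B]%classic) (fun _ => @segment_compact R 0 B)).
have loc : forall x : 'rV[R]_d, (forall i, `[0, B]%classic (x ord0 i)) ->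
    exists2 e : R, 0 < e & \forall y \near x, orthant y -> e <= Psi y.
  move=> x Bx; have [ox|nox] := pselect (forall i, 0 < x ord0 i).
    have := Pcont x ox; move=> /cvgrPdist_lt /(_ (Psi x / 2)).
    have px := Ppos x ox.
    move=> /(_ (divr_gt0 px (ltr0Sn _ 1))) H.
    exists (Psi x / 2); first by rewrite divr_gt0.
    move: H; apply: filterS => y; rewrite ltr_distlC => /andP[h1 h2] _; lra.
  have [i xi0] : exists i, x ord0 i = 0.
    move/existsNP: nox => [i hi]; exists i.
    have := Bx i; rewrite /= in_itv /= => /andP[h1 _].
    by apply/eqP; rewrite eq_le h1 andbT leNgt; apply/negP.
  have Ob : Obound x.
    split; last by exists i.
    by move=> j; have := Bx j; rewrite /= in_itv /= => /andP[].
  have [delta d0 Hd] := Pbd x Ob 1.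
  exists 1 => //; have := @nbhsx_ballx _ _ x delta d0; apply: filterS => y.
  rewrite -ball_normE /= => h oy; apply: Hd => //; rewrite distrC.
  exact: h.
have cover : forall x : 'rV[R]_d, (forall i, `[0, B]%classic (x ord0 i)) ->
    \forall x' \near x & i \near (0:R)^'+, orthant x' -> i <= Psi x'.
  move=> x /loc [eps eps0 Hn].
  exists ([set y | orthant y -> eps <= Psi y], [set e : R | e < eps]) => /=.
    by split => //; exact: nbhs_right_lt eps0.
  by move=> [y e] /= [Hy He] oy; apply: le_trans (ltW He) (Hy oy).
have Fap : Filter (nbhs (0:R)^'+) by exact: at_right_proper_filter.
have Hc := (proj1 (compact_near_coveringP _) cbox) R (0:R)^'+
   (fun e y => orthant y -> e <= Psi y) Fap cover.
have [e [e0 He]] : exists e : R, 0 < e /\ forall x : 'rV[R]_d, (forall i, `[0, B]%classic (x ord0 i)) ->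
    orthant x -> e <= Psi x.
  have H1 := @filterI _ _ Fap _ _ (@nbhs_right_gt R 0) Hc.
  have [e [e0 He]] := @filter_ex _ _ (at_right_proper_filter 0) _ H1; exists e; split => // x Bx; exact: He.
have coord_le : forall x : 'rV[R]_d, orthant x -> forall i, x ord0 i <= usum x.
  move=> x ox i; rewrite /usum (bigD1 i) //= lerDl; apply: sumr_ge0 => j _.
  exact/ltW/ox.
have hRB : Rr <= B by rewrite le_max lexx.
have h1B : 1 <= B by rewrite le_max lexx orbT.
exists (Num.min e 1); first by rewrite lt_min e0 ltr01.
move=> x ox; have [uB|Bu] := leP (usum x) B.
  rewrite ge_min; apply/orP; left; apply: He => // i.
  by rewrite /= in_itv /= (ltW (ox i)) (le_trans (coord_le x ox i) uB).
rewrite ge_min; apply/orP; right.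
have u0 : 0 < usum x by lra.
have := HRr x ox (le_trans hRB (ltW Bu)).
rewrite ler_pdivlMr // mul1r => h; lra.
Qed.
Theorem lemma3p7 (R : realType) (d : nat) (T : R)
  (sigma : 'rV[R]_d -> 'M[R]_d) (b : 'rV[R]_d -> R) (mu : R)
  (Psi : 'rV[R]_d -> R) (lam c : R) :
  0 < T ->
  (forall x, orthant x -> 0 <= b x) ->
  (exists K : R, forall x, orthant x -> b x <= K) ->
  {within orthant (d:=d), continuous b} ->
  0 < mu ->
  (forall x, orthant x -> 0 < Psi x) ->
  C2_on_orthant Psi ->
  0 < lam ->
  (forall x, orthant x -> gen sigma Psi x <= lam * (1 + Psi x)) ->
  (forall xbar, Obound xbar -> forall M : R, exists2 delta : R, 0 < delta &
     forall x, orthant x -> `|x - xbar| < delta -> M <= Psi x) ->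
  (forall M : R, 0 < M -> exists Rr : R, forall x, orthant x ->
     Rr <= usum x -> M <= Psi x / usum x) ->
  (forall x, orthant x -> b x * enorm (grad Psi x *m sigma x) <= c * Psi x) ->
  exists L0 : R, forall L : R, L0 <= L ->
    let Phi := fun (t : R) (x : 'rV[R]_d) => expR (L * (T - t)) * Psi x in
    forall t x, 0 <= t <= T -> orthant x ->
      0 < - 'D_1 (fun s => Phi s x) t - gen sigma (Phi t) x - mu * Phi t x
          - b x * enorm (grad (Phi t) x *m sigma x).
Proof.
move=> T0 b0 _ _ mu0 Ppos C2 lam0 gen_le Pbd Pgr bnd.
have cont : forall x, orthant x -> {for x, continuous Psi}.
  by move=> x ox; have [dx _ _] := C2 x ox; exact: differentiable_continuous.
have [m m0 Hm] := @Psi_lb R d Psi Ppos cont Pbd Pgr.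
exists (lam + mu + `|c| + lam / m + 1) => L HL Phi t x /andP[t0 tT] ox.
rewrite /Phi dexp genZ gradZ -scalemxAl enormZ gtr0_norm ?expR_gt0 //.
set E := expR (L * (T - t)).
have E0 : 0 < E by rewrite expR_gt0.
have hg := gen_le x ox; have hb := bnd x ox; have px := Ppos x ox; have hm := Hm x ox.
have hc : c <= `|c| := ler_norm c.
have hL : lam / m + 1 <= L - lam - mu - c by lra.
have h2 : (lam / m + 1) * m <= (L - lam - mu - c) * Psi x.
  apply: ler_pM => //; last exact: ltW.
  by apply: addr_ge0 => //; apply: divr_ge0; exact: ltW.
have h3 : (lam / m + 1) * m = lam + m by field; rewrite gt_eqF.
rewrite h3 in h2.
set N := enorm _ in hb *.
set G := gen sigma Psi x in hg *.
have hQ : 0 < L * Psi x - G - mu * Psi x - b x * N by nra.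
have := mulr_gt0 E0 hQ; nra.
Qed.
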